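(* Let $K$ be an algebraically closed field with a non-trivial non-Archimedean valuation with dense value group, and a fixed splitting $\gamma\mapsto t^\gamma$. Let $\alpha=(\alpha_1,\dots,\alpha_6)\in(K^* )^6$ have distinct entries and $\omega_k=-\operatorname{val}(\alpha_k)$. Let $\omega$ be a value attained by at least two of the $\omega_k$, and set $\beta=\max\{\operatorname{val}(\alpha_m-\alpha_l):\omega_m=\omega_l=\omega,\ m\ne l\}$ (so $\beta\ge-\omega$). Fix indices $i\neq j$ with $\omega_i=\omega_j=\omega$ and $\operatorname{val}(\alpha_i-\alpha_j)=\beta$. Let $\zeta\in K$ with $\operatorname{val}(\zeta)=0$ be such that $\operatorname{in}(\alpha_i-\alpha_j)=\overline{\zeta}\in\widetilde K$, and choose $\gamma\in\operatorname{val}(K^* )$ with $\beta<\gamma<\operatorname{val}(\alpha_i-\alpha_j-\zeta t^\beta)$. Let $\psi\colon\mathbb{P}^1\to\mathbb{P}^1$ be the linear change of coordinates $\psi(x)=x-\alpha_j-\zeta t^\beta-t^\gamma$ and $\alpha'_s=\psi(\alpha_s)$. Then $\alpha'\in(K^* )^6$ and $\omega'_s=-\operatorname{val}(\alpha'_s)$ satisfy: (1) if $\omega_s>\omega_i$ then $\omega'_s=\omega_s$; (2) if $\omega_s<\omega_i$ then $\omega'_s=\omega_i$ and $\operatorname{in}(\alpha'_s)=-\operatorname{in}(\alpha_i)$; (3) if $\omega_s=\omega_i$ and $s\ne i$ then $\omega'_i=-\gamma<\omega'_s=-\operatorname{val}(\alpha_s-\alpha_i)\le\omega_i$.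
   Context: For $a\in K^*$, $\operatorname{in}(a)$ denotes the class of $a\,t^{-\operatorname{val}(a)}$ in the residue field $\widetilde K$. *)

(* Defs.v *)
From HB Require Import structures.
From mathcomp Require Import all_boot all_order all_algebra.
From mathcomp Require Import reals constructive_ereal.
Set Implicit Arguments. Unset Strict Implicit. Unset Printing Implicit Defensive.
Import Order.TTheory GRing.Theory Num.Theory.
Local Open Scope ring_scope.
Local Open Scope ereal_scope.

Definition is_nonarch_val (K : fieldType) (R : realType) (val : K -> \bar R) :=
  (forall x : K, (val x = +oo) <-> x = 0%R) /\
  (forall x : K, val x != -oo) /\
  (forall x y : K, val (x * y)%R = val x + val y) /\
  (forall x y : K, Order.min (val x) (val y) <= val (x + y)%R) /\
  (exists x : K, x != 0%R /\ val x != 0).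

Definition dense_value_group (K : fieldType) (R : realType) (val : K -> \bar R) :=
  forall a b : R, (a < b)%R -> exists x : K, x != 0%R /\ a%:E < val x < b%:E.

Definition in_value_group (K : fieldType) (R : realType) (val : K -> \bar R)
  (g : R) := exists x : K, x != 0%R /\ val x = g%:E.

(* A splitting gamma |-> t^gamma of the valuation: a group homomorphism
   from val(K^* ) to K^* which is a section of val. Only its values on the
   value group are relevant. *)
Definition is_splitting (K : fieldType) (R : realType) (val : K -> \bar R)
  (tpow : R -> K) :=
  (forall g, in_value_group val g -> tpow g != 0%R /\ val (tpow g) = g%:E) /\
  (forall g h, in_value_group val g -> in_value_group val h ->
     tpow (g + h)%R = (tpow g * tpow h)%R).

Definition rval (K : fieldType) (R : realType) (val : K -> \bar R) (a : K) : R :=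
  fine (val a).

(* the representative a t^{-val a} of in(a) in the valuation ring *)
Definition inrep (K : fieldType) (R : realType) (val : K -> \bar R)
  (tpow : R -> K) (a : K) : K := (a * tpow (- rval val a))%R.

(* Equality of classes in the residue field: two elements u, v of the
   valuation ring have the same residue class iff val (u - v) > 0. *)
Definition res_eq (K : fieldType) (R : realType) (val : K -> \bar R) (u v : K) :=
  0 < val (u - v)%R.

Definition in_eq (K : fieldType) (R : realType) (val : K -> \bar R)
  (tpow : R -> K) (a b : K) :=
  res_eq val (inrep val tpow a) (inrep val tpow b).

(* Main.v *)
Require Import Defs.
From HB Require Import structures.
From mathcomp Require Import all_boot all_order all_algebra.
From mathcomp Require Import reals constructive_ereal.
From mathcomp Require Import ring lra.
Import Order.TTheory GRing.Theory Num.Theory.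
Local Open Scope ring_scope.
Local Open Scope ereal_scope.

Lemma vE {K : fieldType} {R : realType} {val : K -> \bar R}
  (hv : is_nonarch_val val) {x} : x != 0%R -> val x = (rval val x)%:E.
Proof.
case: hv => [h0 [hn _]] x0; rewrite /rval.
case E: (val x) => [r| |] //=.
- by move: x0; rewrite -(proj1 (h0 x) E) eqxx.
- by move: (hn x); rewrite E.
Qed.

Lemma val1 {K : fieldType} {R : realType} {val : K -> \bar R}
  (hv : is_nonarch_val val) : val 1%R = 0.
Proof.
have := proj1 (proj2 (proj2 hv)) 1%R 1%R; rewrite mulr1 (@vE _ _ _ hv 1%R (oner_neq0 K)).
rewrite -EFinD => -[] h; congr EFin; lra.
Qed.

Lemma valN {K : fieldType} {R : realType} {val : K -> \bar R}
  (hv : is_nonarch_val val) x : val (- x)%R = val x.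
Proof.
have hm := proj1 (proj2 (proj2 hv)).
have h1 : val (-1)%R = 0.
  have := hm (-1)%R (-1)%R; rewrite mulrNN mulr1 (val1 hv).
  rewrite (@vE _ _ _ hv (-1)%R) ?oppr_eq0 ?oner_neq0 // -EFinD => -[] h.
  congr EFin; lra.
by rewrite -mulN1r hm h1 add0e.
Qed.

Lemma val_strict {K : fieldType} {R : realType} {val : K -> \bar R}
  (hv : is_nonarch_val val) x y : val x < val y -> val (x + y)%R = val x.
Proof.
have ht := proj1 (proj2 (proj2 (proj2 hv))).
move=> lt; have h1 := ht x y.
have h2 := ht (x + y)%R (- y)%R; rewrite addrK valN // in h2.
apply/eqP; rewrite eq_le; apply/andP; split.
  move: h2; rewrite /Order.min; case: ifP => // _ h2.
  by move: (le_lt_trans h2 lt); rewrite ltxx.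
by move: h1; rewrite /Order.min lt.
Qed.

Lemma val_ge {K : fieldType} {R : realType} {val : K -> \bar R}
  (hv : is_nonarch_val val) x y e : e <= val x -> e <= val y -> e <= val (x + y)%R.
Proof.
move=> hx hy; apply: le_trans (proj1 (proj2 (proj2 (proj2 hv))) x y).
by rewrite le_min hx hy.
Qed.

Lemma val_gt {K : fieldType} {R : realType} {val : K -> \bar R}
  (hv : is_nonarch_val val) x y e : e < val x -> e < val y -> e < val (x + y)%R.
Proof.
move=> hx hy; apply: lt_le_trans (proj1 (proj2 (proj2 (proj2 hv))) x y).
by rewrite lt_min hx hy.
Qed.

Lemma valV {K : fieldType} {R : realType} {val : K -> \bar R}
  (hv : is_nonarch_val val) x : x != 0%R -> val (x^-1)%R = (- rval val x)%:E.
Proof.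
move=> x0; have := proj1 (proj2 (proj2 hv)) x (x^-1)%R.
rewrite mulfV // (val1 hv) (@vE _ _ _ hv x x0) (@vE _ _ _ hv (x^-1)%R) ?invr_eq0 //.
rewrite -EFinD => -[] h; congr EFin; lra.
Qed.
Theorem lemma5p3 (K : closedFieldType) (R : realType) (val : K -> \bar R)
  (tpow : R -> K)
  (hval : is_nonarch_val val) (hdense : dense_value_group val)
  (hsplit : is_splitting val tpow)
  (alpha : 'I_6 -> K)
  (halpha0 : forall k, alpha k != 0%R) (halpha_inj : injective alpha)
  (i j : 'I_6) (hij : i != j)
  (homega_ij : - val (alpha i) = - val (alpha j))
  (hbeta_max : forall m l : 'I_6, m != l ->
      - val (alpha m) = - val (alpha i) -> - val (alpha l) = - val (alpha i) ->
      val (alpha m - alpha l)%R <= val (alpha i - alpha j)%R)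
  (zeta : K) (hzeta : val zeta = 0)
  (hin : res_eq val (inrep val tpow (alpha i - alpha j)%R) zeta)
  (g : R) (hg : in_value_group val g)
  (hbg : val (alpha i - alpha j)%R < g%:E)
  (hg2 : g%:E < val (alpha i - alpha j
                      - zeta * tpow (rval val (alpha i - alpha j)%R))%R) :
  let beta := rval val (alpha i - alpha j)%R in
  let psi := fun x : K => (x - alpha j - zeta * tpow beta - tpow g)%R in
  let alpha' := fun s => psi (alpha s) in
  let omega := fun s => - val (alpha s) in
  let omega' := fun s => - val (alpha' s) in
  (forall s, alpha' s != 0%R) /\
  (forall s, omega s > omega i -> omega' s = omega s) /\
  (forall s, omega s < omega i ->
     omega' s = omega i /\ in_eq val tpow (alpha' s) (- alpha i)%R) /\
  (forall s, omega s = omega i -> s != i ->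
     omega' i = (- g)%:E /\ (- g)%:E < omega' s /\
     omega' s = - val (alpha s - alpha i)%R /\ omega' s <= omega i).
Proof.
move=> beta psi alpha' omega omega'.
have [h0 [hn [hm [ht _]]]] := hval.
have a0 : (alpha i - alpha j)%R != 0%R.
  by rewrite subr_eq0; apply: contra hij => /eqP /halpha_inj ->.
have va : val (alpha i - alpha j)%R = beta%:E := vE hval a0.
have hgb : in_value_group val beta by exists (alpha i - alpha j)%R.
have [tb0 vtb] := proj1 hsplit beta hgb.
have [tg0 vtg] := proj1 hsplit g hg.
set E := (alpha i - alpha j - zeta * tpow beta - tpow g)%R.
have vEg : val E = g%:E.
  have -> : E = (- tpow g + (alpha i - alpha j - zeta * tpow beta))%R.
    by rewrite /E addrC.
  by rewrite val_strict // valN // vtg.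
set W := val (alpha i).
have hW : val (alpha j) = W by apply: oppe_inj; rewrite -homega_ij.
have Wa : W <= val (alpha i - alpha j)%R.
  by apply: val_ge => //; rewrite ?valN ?hW.
have hWg : W < g%:E by apply: le_lt_trans Wa hbg.
have Wfin : W = (rval val (alpha i))%:E := vE hval (halpha0 i).
set c := (alpha i - E)%R.
have vc : val c = W.
  by rewrite /c val_strict // valN // vEg.
have hal : forall s, alpha' s = (alpha s - c)%R.
  by move=> s; rewrite /alpha' /psi /c /E !opprB; ring.
have case1 : forall s, val (alpha s) < W -> val (alpha' s) = val (alpha s).
  by move=> s lt; rewrite hal val_strict // valN // vc.
have case2 : forall s, W < val (alpha s) -> val (alpha' s) = W.
  by move=> s lt; rewrite hal addrC val_strict // valN // vc.
have case3i : val (alpha' i) = g%:E.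
  by rewrite hal /c opprB addrC subrK.
have lts : forall s, val (alpha s) = W -> s != i ->
    val (alpha s - alpha i)%R < g%:E.
  move=> s hs hsi; apply: le_lt_trans hbg.
  by apply: hbeta_max => //; rewrite hs.
have case3 : forall s, val (alpha s) = W -> s != i ->
    val (alpha' s) = val (alpha s - alpha i)%R.
  move=> s hs hsi.
  have -> : alpha' s = ((alpha s - alpha i) + E)%R by rewrite hal /c; ring.
  by rewrite val_strict // vEg; apply: lts.
split.
  move=> s; apply/eqP=> /(proj2 (h0 _)) hinf.
  case: (ltgtP (val (alpha s)) W) => hs.
  - by move: hinf; rewrite case1 // h0 => /eqP; rewrite (negbTE (halpha0 s)).
  - by move: hinf; rewrite case2 // Wfin.
  - case: (eqVneq s i) => [esi|hsi]; first by move: hinf; rewrite esi case3i.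
    move: hinf; rewrite case3 // h0 => /eqP; rewrite subr_eq0 => /eqP.
    by move/halpha_inj => /eqP; rewrite (negbTE hsi).
split.
  by move=> s; rewrite /omega' /omega lteN2 => hs; rewrite case1.
split.
  move=> s; rewrite /omega lteN2 => hs; split; first by rewrite /omega' case2.
  rewrite /in_eq /res_eq /inrep /rval valN // (case2 s hs).
  rewrite mulNr opprK -mulrDl hm.
  have hv : in_value_group val (- rval val (alpha i))%R.
    exists ((alpha i)^-1)%R; rewrite invr_eq0 halpha0; split => //.
    exact: valV.
  rewrite (proj2 (proj1 hsplit _ hv)) -/(rval val (alpha i)).
  have : W < val (alpha' s + alpha i)%R.
    have -> : (alpha' s + alpha i = alpha s + E)%R by rewrite hal /c; ring.
    by apply: val_gt => //; rewrite vEg.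
  rewrite Wfin; case: (val (alpha' s + alpha i)%R) => [r| |] //.
  - by rewrite lte_fin -EFinD lte_fin => h; lra.
  - by move=> _; rewrite addye // ltry.
move=> s; rewrite /omega => /oppe_inj hs hsi.
split; first by rewrite /omega' case3i.
rewrite /omega' case3 //; split; first by rewrite EFinN lteN2; apply: lts.
split => //; rewrite leeN2.
by apply: val_ge => //; rewrite ?valN ?hs.
Qed.
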